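(* Let $U$ be a frame-acyclic molecule and $k\in\mathbb{N}$ with $\mathrm{frdim}\,U\le k\le\dim U-1$. Then every $k$-pre-ordering of $U$ is refined by a $k$-ordering of $U$.
   Context: Oriented graded posets: graded posets ($\dim x$ the grade) with, for each $x$, a partition of the elements covered by $x$ into $\partial^-x$ and $\partial^+x$. $\mathrm{cl}\{x\}$ is the downward closure. For closed $U$, $k\ge0$, $\partial_k^\alpha U$ is the downward closure of the $x\in U$ with either $\dim x=k$ and no $y\in U$ with $x\in\partial^{-\alpha}y$, or $x$ maximal with $\dim x<k$. Molecules: smallest isomorphism-closed class containing the point, closed under pasting $U\#_kV$ (pushout along $\partial_k^+U\cong\partial_k^-V$), and containing $U\Rightarrow V$ (pushout along $\partial_{m-1}U\cong\partial_{m-1}V$ plus a new top element with inputs the maximal elements of $U$, outputs those of $V$) for round $U,V$ of equal dimension $m$ with matching $(m-1)$-boundaries ($U$ round iff $\partial_{k-1}U=\partial_k^-U\cap\partial_k^+U$ for $k<\dim U$). Submolecules $V\sqsubseteq U$: smallest class of embeddings containing isomorphisms, closed under composition, containing $U\hookrightarrow U\#_kV\hookleftarrow V$. $\mathrm{frdim}\,V$ is the dimension of $\bigcup\{\mathrm{cl}\{x\}\cap\mathrm{cl}\{y\}:x\ne y\text{ maximal in }V\}$; for $k\ge-1$, $\mathcal{M}_kV$ is the directed graph whose vertices are the maximal elements of $V$ of dimension $>k$, with an edge $x\to y$ iff some $k$-dimensional element lies in $\partial_k^+\mathrm{cl}\{x\}\cap\partial_k^-\mathrm{cl}\{y\}$.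 $U$ is frame-acyclic if $\mathcal{M}_{\mathrm{frdim}W}W$ is acyclic for every $W\sqsubseteq U$. A linearly ordered partition of a set is a partition with a linear order $(E_1,\dots,E_m)$ of its classes. A $k$-pre-ordering of $U$ is a linearly ordered partition of the vertices of $\mathcal{M}_kU$ such that for every edge $x\to y$ the class of $x$ is $\le$ the class of $y$; a $k$-ordering is a $k$-pre-ordering all of whose classes are singletons. $L$ refines $K$ if each class of $K$ is the union of a block of consecutive classes of $L$, in order. *)

(* Defs.v *)
From HB Require Import structures.
From mathcomp Require Import all_boot all_order all_algebra.
Set Implicit Arguments. Unset Strict Implicit. Unset Printing Implicit Defensive.
Import Order.TTheory GRing.Theory Num.Theory.

(* An ogposet is a finite type with, for each sign b (false = -,       *)
(* true = +), a relation  face b x y  meaning  y \in \partial^b x.      *)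
(* Gradedness (all maximal chains in cl{x} have the same length        *)
(* dim x) is expressed by a grading function: covers decrease the      *)
(* grade by exactly one, and elements of positive grade are not        *)
(* minimal (so minimal elements have grade 0).                         *)
Record ogposet := Ogposet {
  og_sort :> finType;
  face : bool -> rel og_sort;
  gdim : og_sort -> nat;
  face_disj : forall x y, ~~ (face false x y && face true x y);
  face_gdim : forall b x y, face b x y -> gdim x = (gdim y).+1;
  gdim_face : forall x, 0 < gdim x -> exists b y, face b x y
}.

Section OgDefs.
Variable P : ogposet.

Definition facerel : rel P := fun x y => face false x y || face true x y.
Definition ogle (y x : P) : bool := connect facerel x y.
Definition clos (A : {set P}) : {set P} := [set y | [exists x in A, ogle y x]].
Definition closed (A : {set P}) : bool := clos A \subset A.
Definition maximal_in (A : {set P}) (x : P) : bool :=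
  (x \in A) && [forall y in A, ogle x y ==> (y == x)].

Definition setdimN (A : {set P}) : nat := \max_(x in A) gdim x.
Definition odim : nat := setdimN [set: P].
Definition setdimZ (A : {set P}) : int :=
  if A == set0 then (-1)%R else Posz (setdimN A).

(* \partial_k^a A, for a = false (-) or true (+), k >= 0 *)
Definition bd (a : bool) (k : nat) (A : {set P}) : {set P} :=
  clos [set x in A | ((gdim x == k) && [forall y in A, ~~ face (~~ a) y x])
                     || (maximal_in A x && (gdim x < k))].
Definition bdall (k : nat) (A : {set P}) : {set P} := bd false k A :|: bd true k A.
(* \partial_{k-1}^a A and \partial_{k-1} A, with \partial_{-1} = empty *)
Definition bdp (a : bool) (k : nat) (A : {set P}) : {set P} :=
  if k is k'.+1 then bd a k' A else set0.
Definition bdpall (k : nat) (A : {set P}) : {set P} :=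
  if k is k'.+1 then bdall k' A else set0.

Definition round : Prop :=
  forall k, k < odim ->
    bd false k [set: P] :&: bd true k [set: P] = bdpall k [set: P].

Definition maxel (x : P) : bool := maximal_in [set: P] x.

Definition frdim : int :=
  setdimZ (\bigcup_(x | maxel x) \bigcup_(y | maxel y && (y != x))
             (clos [set x] :&: clos [set y])).

Definition Mvert (k : int) (x : P) : bool := maxel x && (k < Posz (gdim x))%R.
Definition Medge (k : int) (x y : P) : bool :=
  Mvert k x && Mvert k y &&
  match k with
  | Posz n => [exists z, (gdim z == n) && (z \in bd true n (clos [set x]))
                                      && (z \in bd false n (clos [set y]))]
  | Negz _ => false
  end.
Definition Macyclic (k : int) : Prop :=
  forall x y, Medge k x y -> ~~ connect (Medge k) y x.

(* A linearly ordered partition (E_0, ..., E_{m-1}) of the vertices of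
   M_k is encoded by the map c sending a vertex to the index of its class;
   classes are nonempty. *)
Definition preordering (k : int) (m : nat) (c : P -> nat) : Prop :=
  [/\ (forall x, Mvert k x -> c x < m),
      (forall i, i < m -> exists x, Mvert k x /\ c x = i)
    & (forall x y, Medge k x y -> c x <= c y)].
Definition ordering (k : int) (m : nat) (c : P -> nat) : Prop :=
  preordering k m c /\ {in Mvert k &, injective c}.
(* L (encoded by cL) refines K (encoded by cK): each class of K is the
   union of a block of consecutive classes of L, in order; i.e. class
   indices of K are a nondecreasing function of class indices of L. *)
Definition refines (k : int) (cL cK : P -> nat) : Prop :=
  exists h : nat -> nat, {homo h : i j / i <= j} /\
    forall x, Mvert k x -> cK x = h (cL x).

End OgDefs.

Definition og_iso (P Q : ogposet) (f : P -> Q) : Prop :=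
  bijective f /\ forall b x y, face b x y = face b (f x) (f y).
Definition og_emb (P Q : ogposet) (f : P -> Q) : Prop :=
  [/\ injective f,
      (forall b x y, face b x y = face b (f x) (f y))
    & (forall b x z, face b (f x) z -> exists y, z = f y)].

(* W (with i : U -> W, j : V -> W) is the pasting U #_k V, i.e. the
   pushout of U and V along the isomorphism \partial_k^+ U ~ \partial_k^- V *)
Definition is_paste (k : nat) (U V W : ogposet) (i : U -> W) (j : V -> W) : Prop :=
  [/\ og_emb i, og_emb j,
      (forall w, (exists x, w = i x) \/ (exists y, w = j y)),
      (forall x, x \in bd true k [set: U] <-> exists y, i x = j y)
    & (forall y, y \in bd false k [set: V] <-> exists x, i x = j y)].

Definition is_rewrite (U V W : ogposet) (i : U -> W) (j : V -> W) (t : W) : Prop :=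
  [/\ [/\ round U, round V & odim U = odim V],
      og_emb i /\ og_emb j,
      [/\ (forall w, w != t -> (exists x, w = i x) \/ (exists y, w = j y)),
          (forall x, i x != t)
        & (forall y, j y != t)],
      [/\ (forall x, x \in bdpall (odim U) [set: U] <-> exists y, i x = j y),
          (forall y, y \in bdpall (odim V) [set: V] <-> exists x, i x = j y)
        & (forall a x y, i x = j y ->
             (x \in bdp a (odim U) [set: U]) = (y \in bdp a (odim V) [set: V]))]
    & (forall w, face false t w <-> exists2 x, maxel x & w = i x) /\
      (forall w, face true t w <-> exists2 y, maxel y & w = j y)].

Inductive molecule : ogposet -> Prop :=
| mol_point (P : ogposet) : #|P| = 1 -> molecule P
| mol_iso (P Q : ogposet) (f : P -> Q) : molecule P -> og_iso f -> molecule Q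
| mol_paste (k : nat) (U V W : ogposet) (i : U -> W) (j : V -> W) :
    molecule U -> molecule V -> is_paste k i j -> molecule W
| mol_rewrite (U V W : ogposet) (i : U -> W) (j : V -> W) (t : W) :
    molecule U -> molecule V -> is_rewrite i j t -> molecule W.

Inductive subm : forall (W U : ogposet), (W -> U) -> Prop :=
| subm_iso (W U : ogposet) (f : W -> U) : og_iso f -> subm f
| subm_comp (W X U : ogposet) (f : W -> X) (g : X -> U) :
    subm f -> subm g -> subm (g \o f)
| subm_pasteL (k : nat) (U V W : ogposet) (i : U -> W) (j : V -> W) :
    molecule U -> molecule V -> is_paste k i j -> subm i
| subm_pasteR (k : nat) (U V W : ogposet) (i : U -> W) (j : V -> W) :
    molecule U -> molecule V -> is_paste k i j -> subm j.

Definition frame_acyclic (U : ogposet) : Prop :=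
  forall (W : ogposet) (f : W -> U), subm f -> @Macyclic W (frdim W).

(* Main.v *)
Require Import Defs.
From HB Require Import structures.
From mathcomp Require Import all_boot all_order all_algebra.
From mathcomp Require Import zify.
Import Order.TTheory GRing.Theory Num.Theory.


Lemma linext (T : finType) (V : pred T) (E : rel T) (c : T -> nat) :
  (forall x y, E x y -> ~~ connect E y x) ->
  (forall x y, E x y -> c x <= c y) ->
  exists m' (c' : T -> nat),
  [/\ (forall x, V x -> c' x < m'),
      (forall i, i < m' -> exists x, V x /\ c' x = i),
      (forall x y, V x -> V y -> E x y -> c' x <= c' y),
      {in V &, injective c'}
    & exists h : nat -> nat, {homo h : i j / i <= j} /\
        forall x, V x -> c x = h (c' x)].
Proof.
move=> acyc Ec.
pose N := #|T|.+1.
pose rk x := #|[set z | connect E z x]|.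
pose idx (x : T) := nat_of_ord (enum_rank x).
have rkN x : rk x < N by rewrite /rk /N ltnS max_card.
have idxN x : idx x < N by rewrite /idx /N (leq_trans (ltn_ord _)) // cardT size_enum_ord.
have idx_inj : injective idx by move=> x y /val_inj /enum_rank_inj.
pose key x := c x * N * N + rk x * N + idx x.
have rkE x y : E x y -> rk x < rk y.
  move=> Exy; apply: proper_card; apply/properP; split.
    apply/subsetP=> z; rewrite !inE => Hz; apply: connect_trans Hz _.
    exact: connect1.
  exists y; first by rewrite inE connect0.
  by rewrite inE; apply: acyc.
have keyE x y : E x y -> key x < key y.
  move=> Exy; have h1 := Ec _ _ Exy; have h2 := rkE _ _ Exy.
  have h3 := idxN x; rewrite /key.
  have : rk x * N + idx x < rk y * N + idx y by nia.
  nia.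
have keyc x y : c x < c y -> key x < key y.
  move=> h; have h2 := rkN x; have h3 := idxN x; rewrite /key.
  have : rk x * N + idx x < N * N by nia.
  nia.
have key_inj : injective key.
  move=> x y; rewrite /key => h; apply: idx_inj.
  have := idxN x; have := idxN y; move=> *.
  have e1 : (c x * N * N + rk x * N + idx x) %% N = (c y * N * N + rk y * N + idx y) %% N by rewrite h.
  have ex : forall a b d, a * N * N + b * N + d = (a * N + b) * N + d by move=> *; lia.
  by move: e1; rewrite !ex !modnMDl !modn_small.
pose c' x := #|[set z | V z & key z < key x]|.
have c'lt x y : V x -> key x < key y -> c' x < c' y.
  move=> Vx h; apply: proper_card; apply/properP; split.
    apply/subsetP=> z; rewrite !inE => /andP[-> hz] /=; exact: ltn_trans hz h.
  by exists x; rewrite inE ?Vx ?h ?ltnn.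
have c'inj : {in V &, injective c'}.
  move=> x y Vx Vy h; apply: key_inj.
  case: (ltngtP (key x) (key y)) => // hk.
    by have := c'lt _ _ Vx hk; rewrite h ltnn.
  by have := c'lt _ _ Vy hk; rewrite h ltnn.
pose m' := #|[set z | V z]|.
have c'm x : V x -> c' x < m'.
  move=> Vx; apply: proper_card; apply/properP; split.
    by apply/subsetP=> z; rewrite !inE => /andP[].
  by exists x; rewrite inE ?Vx // ltnn.
exists m', c'; split => //.
- move=> i im.
  have U1 : uniq (map c' (enum [set z | V z])).
    rewrite map_inj_in_uniq ?enum_uniq // => x y; rewrite !mem_enum !inE.
    exact: c'inj.
  have S1 : {subset map c' (enum [set z | V z]) <= iota 0 m'}.
    move=> j /mapP[x]; rewrite mem_enum inE => Vx ->; rewrite mem_iota /=.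
    exact: c'm.
  have S2 : size (iota 0 m') <= size (map c' (enum [set z | V z])).
    by rewrite size_iota size_map -cardE.
  have [_ eq] := uniq_min_size U1 S1 S2.
  have : i \in map c' (enum [set z | V z]) by rewrite eq mem_iota.
  by case/mapP=> x; rewrite mem_enum inE => Vx ->; exists x.
- move=> x y Vx Vy Exy; apply: ltnW; apply: c'lt => //; exact: keyE.
- exists (fun i => \max_(z | V z && (c' z <= i)) c z); split.
    move=> i j ij; apply/bigmax_leqP => z /andP[Vz hz].
    by apply: leq_bigmax_cond; rewrite Vz (leq_trans hz ij).
  move=> x Vx; apply/eqP; rewrite eqn_leq; apply/andP; split.
    by apply: leq_bigmax_cond; rewrite Vx leqnn.
  apply/bigmax_leqP => z /andP[Vz hz]; rewrite leqNgt; apply/negP => hc.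
  by have := c'lt _ _ Vx (keyc _ _ hc); rewrite ltnNge hz.
Qed.

Lemma clos_closS (P : ogposet) (A : {set P}) : clos (clos A) \subset clos A.
Proof.
apply/subsetP=> z; rewrite !inE => /existsP[w /andP[]].
rewrite inE => /existsP[x /andP[xA hw]] hz.
by apply/existsP; exists x; rewrite xA; apply: connect_trans hw hz.
Qed.

Lemma clos_mono {P : ogposet} {A B : {set P}} : A \subset B -> clos A \subset clos B.
Proof.
move=> /subsetP AB; apply/subsetP=> z; rewrite !inE => /existsP[w /andP[wA h]].
by apply/existsP; exists w; rewrite AB.
Qed.

Lemma bd_sub {P : ogposet} a n (A : {set P}) : bd a n (clos A) \subset clos A.
Proof.
have h : [set x in clos A | ((gdim x == n) && [forall y in clos A, ~~ face (~~ a) y x])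
                     || (maximal_in (clos A) x && (gdim x < n))] \subset clos A.
  by apply/subsetP=> z; rewrite inE => /andP[].
apply/subsetP=> z hz; apply: (subsetP (@clos_closS P A)).
exact: (subsetP (clos_mono h)).
Qed.

Lemma edge_frdim {P : ogposet} {k : nat} {x y : P} :
  (frdim P <= Posz k)%R -> Medge (Posz k) x y -> x != y -> frdim P = Posz k.
Proof.
move=> Hfr /andP[/andP[/andP[mx _] /andP[my _]]] /existsP[z /andP[/andP[/eqP gz zx] zy]] xy.
have zS : z \in \bigcup_(x | maxel x) \bigcup_(y | maxel y && (y != x))
             (clos [set x] :&: clos [set y]).
  apply/bigcupP; exists x => //; apply/bigcupP; exists y; first by rewrite my eq_sym.
  by rewrite inE (subsetP (bd_sub _ _ _) _ zx) (subsetP (bd_sub _ _ _) _ zy).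
move: Hfr; rewrite /frdim /setdimZ.
case: eqP => [E0|_]; first by rewrite E0 inE in zS.
rewrite lez_nat => h; congr Posz; apply/eqP; rewrite eqn_leq h /=.
by rewrite -gz /setdimN; apply: leq_bigmax_cond.
Qed.

Theorem mainTheorem13 (U : ogposet) (k : nat) :
  molecule U -> frame_acyclic U ->
  (frdim U <= (Posz k))%R -> (k < odim U)%N ->
  forall (m : nat) (c : U -> nat), preordering (Posz k) m c ->
  exists (m' : nat) (c' : U -> nat),
    ordering (Posz k) m' c' /\ refines (Posz k) c' c.
Proof.
move=> _ FA Hfr _ m c [Pv Ps Pe].
pose E : rel U := fun x y => Medge (Posz k) x y && (x != y).
have acyc x y : E x y -> ~~ connect E y x.
  move=> /andP[Exy nxy].
  have Hf := edge_frdim Hfr Exy nxy.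
  have MA : @Macyclic U (frdim U).
    apply: (FA U id); apply: subm_iso; split; first by exists id.
    by [].
  rewrite Hf in MA; apply: contra (MA _ _ Exy).
  apply: connect_sub => a b /andP[hab _]; exact: connect1.
have Ec x y : E x y -> c x <= c y by move=> /andP[h _]; exact: Pe.
have [m' [c' [H1 H2 H3 H4 H5]]] := @linext U (Mvert (Posz k)) E c acyc Ec.
exists m', c'; split; last first.
  by case: H5 => h [hh hc]; exists h; split.
split=> //; split => // x y Exy.
have [/andP[Vx Vy] _] := andP Exy.
case: (eqVneq x y) => [->//|nxy].
by apply: H3 => //; rewrite /E Exy.
Qed.
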